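(* Let $\Xi:M_l\to M_l$ be the pinching map $\Xi((m_{ij}))=(\delta_{ij}m_{ij})$ and let $\Psi:M_N\to M_k$ be any quantum channel, with $K_\Psi=\Psi(D_N)$. Then the image $K_{\Xi\otimes\Psi}=(\Xi\otimes\Psi)(D_{lN})\subset M_l\otimes M_k$ is $$K_{\Xi\otimes\Psi}=\{a_1B_1\oplus\dots\oplus a_lB_l:\ (a_i)\in\Delta_l,\ B_1,\dots,B_l\in K_\Psi\},$$ where $\oplus$ denotes the block-diagonal matrix in $M_l\otimes M_k\cong M_l(M_k)$.
   Context: $\Delta_l$ is the probability simplex $\{(a_1,\dots,a_l):a_i\ge0,\sum a_i=1\}$; $D_d$ is the set of $d\times d$ density matrices. *)

(* Defs.v *)
From HB Require Import structures.
From mathcomp Require Import all_boot all_order all_algebra.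
Set Implicit Arguments. Unset Strict Implicit. Unset Printing Implicit Defensive.
Import Order.TTheory GRing.Theory Num.Theory.
Local Open Scope ring_scope.

Section Defs.
Variable C : numClosedFieldType.

Definition adjmx m n (A : 'M[C]_(m, n)) : 'M[C]_(n, m) := (map_mx Num.conj A)^T.

Definition psdmx n (A : 'M[C]_n) : Prop :=
  adjmx A = A /\ forall v : 'rV[C]_n, 0 <= (v *m A *m adjmx v) 0 0.

Definition density n (A : 'M[C]_n) : Prop := psdmx A /\ \tr A = 1.

(* identification of 'I_(m*n) with 'I_m * 'I_n (inverse of mxvec_index) *)
Definition pair_of_idx m n (r : 'I_(m * n)) : 'I_m * 'I_n :=
  enum_val (cast_ord (esym (mxvec_cast m n)) r).

Definition kron m n p q (A : 'M[C]_(m, n)) (B : 'M[C]_(p, q)) : 'M[C]_(m * p, n * q) :=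
  \matrix_(r, c)
    (let ik := @pair_of_idx m p r in let jl := @pair_of_idx n q c in
     A ik.1 jl.1 * B ik.2 jl.2).

Definition blockmx l N (X : 'M[C]_(l * N)) (i j : 'I_l) : 'M[C]_N :=
  \matrix_(a, b) X (mxvec_index i a) (mxvec_index j b).

Definition tensmap l l' N k (Phi : 'M[C]_l -> 'M[C]_l') (Psi : 'M[C]_N -> 'M[C]_k)
    (X : 'M[C]_(l * N)) : 'M[C]_(l' * k) :=
  \sum_(i < l) \sum_(j < l) kron (Phi (delta_mx i j)) (Psi (blockmx X i j)).

Definition quantum_channel N k (Psi : {linear 'M[C]_N -> 'M[C]_k}) : Prop :=
  (forall m (X : 'M[C]_(m * N)), psdmx X -> psdmx (tensmap id Psi X)) /\
  (forall X : 'M[C]_N, \tr (Psi X) = \tr X).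

Definition pinching l (M : 'M[C]_l) : 'M[C]_l := \matrix_(i, j) ((i == j)%:R * M i j).

Definition in_simplex l (a : 'I_l -> C) : Prop :=
  (forall i, 0 <= a i) /\ \sum_(i < l) a i = 1.

Definition blockdiag l k (a : 'I_l -> C) (B : 'I_l -> 'M[C]_k) : 'M[C]_(l * k) :=
  \sum_(i < l) kron (delta_mx i i) (a i *: B i).

End Defs.

(* Main.v *)
Require Import Defs.
From mathcomp Require Import all_boot all_order all_algebra.
Import Order.TTheory GRing.Theory Num.Theory.
Local Open Scope ring_scope.
Set Implicit Arguments. Unset Strict Implicit.

Section S. Variable C : numClosedFieldType.
Implicit Types (m n p : nat).

Lemma pair_mv m n (i : 'I_m) (a : 'I_n) : pair_of_idx (mxvec_index i a) = (i, a).
Proof. by rewrite /pair_of_idx /mxvec_index cast_ordK enum_rankK. Qed.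

Lemma mv_pair m n (r : 'I_(m * n)) :
  mxvec_index (pair_of_idx r).1 (pair_of_idx r).2 = r.
Proof. by rewrite /pair_of_idx /mxvec_index -surjective_pairing enum_valK cast_ordKV. Qed.

Lemma mv_inj m n (i j : 'I_m) (a b : 'I_n) :
  (mxvec_index i a == mxvec_index j b) = (i == j) && (a == b).
Proof.
apply/eqP/andP => [h|[/eqP -> /eqP -> //]].
by have := pair_mv i a; rewrite h pair_mv => -[-> ->].
Qed.

Lemma sum_mv m n (F : 'I_(m * n) -> C) :
  \sum_r F r = \sum_(i < m) \sum_(a < n) F (mxvec_index i a).
Proof.
rewrite pair_big /=.
rewrite (reindex (fun p : 'I_m * 'I_n => mxvec_index p.1 p.2)) //=.
exists (@pair_of_idx m n) => [p _|r _]; last exact: mv_pair.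
by rewrite pair_mv -surjective_pairing.
Qed.

Lemma adjmxM m n p (A : 'M[C]_(m, n)) (B : 'M[C]_(n, p)) :
  adjmx (A *m B) = adjmx B *m adjmx A.
Proof. by rewrite /adjmx map_mxM trmx_mul. Qed.

Lemma adjmxK m n (A : 'M[C]_(m, n)) : adjmx (adjmx A) = A.
Proof. by apply/matrixP => i j; rewrite !mxE conjCK. Qed.

Lemma adjmxD m n (A B : 'M[C]_(m, n)) : adjmx (A + B) = adjmx A + adjmx B.
Proof. by apply/matrixP => i j; rewrite !mxE rmorphD. Qed.

Lemma adjmxZ m n c (A : 'M[C]_(m, n)) : adjmx (c *: A) = c^* *: adjmx A.
Proof. by apply/matrixP => i j; rewrite !mxE rmorphM. Qed.

Lemma adjmx0 m n : adjmx (0 : 'M[C]_(m, n)) = 0.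
Proof. by apply/matrixP => i j; rewrite !mxE rmorph0. Qed.

Lemma psd_conj m n (Q : 'M[C]_(m, n)) (X : 'M[C]_n) :
  psdmx X -> psdmx (Q *m X *m adjmx Q).
Proof.
move=> [hX pX]; split.
  by rewrite !adjmxM adjmxK hX mulmxA.
move=> v; have := pX (v *m Q).
by rewrite adjmxM !mulmxA.
Qed.

Lemma psd0 n : psdmx (0 : 'M[C]_n).
Proof. by split; [rewrite adjmx0 | move=> v; rewrite mulmx0 mul0mx mxE]. Qed.

Lemma psdD n (A B : 'M[C]_n) : psdmx A -> psdmx B -> psdmx (A + B).
Proof.
move=> [hA pA] [hB pB]; split; first by rewrite adjmxD hA hB.
by move=> v; rewrite mulmxDr mulmxDl mxE addr_ge0.
Qed.

Lemma psdZ n c (A : 'M[C]_n) : 0 <= c -> psdmx A -> psdmx (c *: A).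
Proof.
move=> c0 [hA pA]; split; first by rewrite adjmxZ geC0_conj // hA.
by move=> v; rewrite -scalemxAr -scalemxAl mxE mulr_ge0.
Qed.

Lemma psd_sum I (r : seq I) (P : pred I) n (F : I -> 'M[C]_n) :
  (forall i, P i -> psdmx (F i)) -> psdmx (\sum_(i <- r | P i) F i).
Proof.
move=> h; elim/big_rec: _ => [|i x Pi hx]; first exact: psd0.
exact: psdD (h _ Pi) hx.
Qed.

Lemma quad_delta n (X : 'M[C]_n) (a b : 'I_n) :
  (delta_mx (0 : 'I_1) a *m X *m adjmx (delta_mx (0 : 'I_1) b)) 0 0 = X a b.
Proof.
have -> : adjmx (delta_mx (0 : 'I_1) b) = delta_mx b 0 :> 'M[C]_(n, 1).
  by apply/matrixP => i j; rewrite !mxE conjC_nat andbC.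
by rewrite -rowE -colE !mxE.
Qed.

Lemma psd_diag n (X : 'M[C]_n) a : psdmx X -> 0 <= X a a.
Proof. by move=> [_ pX]; rewrite -quad_delta. Qed.

Lemma addE m n (A B : 'M[C]_(m, n)) i j : (A + B) i j = A i j + B i j.
Proof. by rewrite mxE. Qed.
Lemma scaleE m n c (A : 'M[C]_(m, n)) i j : (c *: A) i j = c * A i j.
Proof. by rewrite mxE. Qed.

Lemma psd_tr0 n (X : 'M[C]_n) : psdmx X -> \tr X = 0 -> X = 0.
Proof.
move=> pX tr0.
have d0 a : X a a = 0.
  move: tr0; rewrite /mxtrace => /eqP; rewrite psumr_eq0 => [/allP h|i _].
    by apply/eqP; apply: h; rewrite mem_index_enum.
  exact: psd_diag.
apply/matrixP => a b; rewrite mxE.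
have [->|neq] := eqVneq a b; first exact: d0.
case: (pX) => hX qX.
set x := X a b.
have xba : X b a = x^*.
  by rewrite -[in LHS]hX mxE mxE.
set t := - x.
have := qX (delta_mx 0 a + t *: delta_mx 0 b).
rewrite adjmxD adjmxZ !mulmxDl !mulmxDr -!scalemxAl -!scalemxAr.
rewrite !addE !scaleE !quad_delta !d0 xba /t -/x.
rewrite rmorphN /= !mulr0 addr0 add0r !mulNr [x^* * x]mulrC -opprD oppr_ge0 => h.
have y0 : 0 <= x * x^* by rewrite mul_conjC_ge0.
apply/eqP; rewrite -mul_conjC_eq0 eq_le y0 andbT.
by apply: le_trans h; rewrite lerDl.
Qed.

Lemma kron_mv m n p q (A : 'M[C]_(m, n)) (B : 'M[C]_(p, q)) i j a b :
  kron A B (mxvec_index i a) (mxvec_index j b) = A i j * B a b.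
Proof. by rewrite mxE !pair_mv. Qed.

Lemma mx_mv_eq m n (M M' : 'M[C]_(m * n)) :
  (forall i a j b, M (mxvec_index i a) (mxvec_index j b) =
                   M' (mxvec_index i a) (mxvec_index j b)) -> M = M'.
Proof. by move=> h; apply/matrixP => r s; rewrite -(mv_pair r) -(mv_pair s). Qed.

Lemma blockmx_kron l N (A : 'M[C]_l) (B : 'M[C]_N) i j :
  blockmx (kron A B) i j = A i j *: B.
Proof. by apply/matrixP => a b; rewrite !mxE !pair_mv. Qed.

Lemma blockmx_sum l N I (r : seq I) (P : pred I) (F : I -> 'M[C]_(l * N)) i j :
  blockmx (\sum_(t <- r | P t) F t) i j = \sum_(t <- r | P t) blockmx (F t) i j.
Proof. by apply/matrixP => a b; rewrite mxE !summxE; apply: eq_bigr => t _; rewrite mxE. Qed.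

Lemma tr_block l N (X : 'M[C]_(l * N)) : \tr X = \sum_i \tr (blockmx X i i).
Proof.
rewrite /mxtrace sum_mv; apply: eq_bigr => i _; apply: eq_bigr => a _.
by rewrite mxE.
Qed.

Lemma sum_deltal n (c : 'I_n) (F : 'I_n -> C) : \sum_r (r == c)%:R * F r = F c.
Proof.
rewrite (bigD1 c) //= eqxx mul1r big1 ?addr0 // => r /negPf ->.
by rewrite mul0r.
Qed.

Lemma sum_deltar n (c : 'I_n) (F : 'I_n -> C) : \sum_r F r * (r == c)%:R = F c.
Proof. by rewrite -(sum_deltal c); apply: eq_bigr => r _; rewrite mulrC. Qed.

Definition Pmat l N (i : 'I_l) : 'M[C]_(N, l * N) :=
  \matrix_(a, r) (r == mxvec_index i a)%:R.

Lemma P_mul l N m (X : 'M[C]_(l * N, m)) i a s :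
  (Pmat N i *m X) a s = X (mxvec_index i a) s.
Proof.
rewrite mxE; under eq_bigr => r _ do rewrite mxE.
exact: sum_deltal.
Qed.

Lemma mul_adjP l N m (X : 'M[C]_(m, l * N)) i r b :
  (X *m adjmx (Pmat N i)) r b = X r (mxvec_index i b).
Proof.
rewrite mxE; under eq_bigr => s _ do rewrite !mxE conjC_nat.
exact: sum_deltar.
Qed.

Lemma block_P l N (X : 'M[C]_(l * N)) i :
  blockmx X i i = Pmat N i *m X *m adjmx (Pmat N i).
Proof. by apply/matrixP => a b; rewrite mul_adjP P_mul mxE. Qed.

Lemma kron_P l N (W : 'M[C]_N) (i : 'I_l) :
  kron (delta_mx i i) W = adjmx (Pmat N i) *m W *m Pmat N i.
Proof.
apply: mx_mv_eq => i' a j' b; rewrite kron_mv !mxE.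
under eq_bigr => d _ do rewrite !mxE mv_inj.
under eq_bigr => d _ do under eq_bigr => c _ do rewrite !mxE conjC_nat mv_inj.
case: (i' == i) => /=; last first.
  rewrite mul0r big1 // => d _; rewrite big1 ?mul0r // => c _.
  by rewrite mul0r.
case: (j' == i) => /=; last first.
  by rewrite mul0r big1 // => d _; rewrite mulr0.
rewrite mul1r.
under eq_bigr => d _ do under eq_bigr => c _ do rewrite eq_sym.
under eq_bigr => d _ do rewrite sum_deltal.
by under eq_bigr => d _ do rewrite eq_sym; rewrite sum_deltar.
Qed.

Lemma pinching_delta l (i j : 'I_l) :
  pinching (delta_mx i j : 'M[C]_l) = (i == j)%:R *: delta_mx i j.
Proof.
apply/matrixP => r s; rewrite !mxE.
case: (r =P i) => [->|_]; case: (s =P j) => [->|_] /=; by rewrite ?mulr0.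
Qed.

Lemma kron0 m n p q (B : 'M[C]_(p, q)) : kron (0 : 'M[C]_(m, n)) B = 0.
Proof. by apply/matrixP => r s; rewrite !mxE /= mxE mul0r. Qed.

Lemma tensmap_pinch l N k (Psi : {linear 'M[C]_N -> 'M[C]_k}) (X : 'M[C]_(l * N)) :
  tensmap (@pinching C l) Psi X = \sum_i kron (delta_mx i i) (Psi (blockmx X i i)).
Proof.
rewrite /tensmap; apply: eq_bigr => i _; rewrite (bigD1 i) //= big1 ?addr0.
  by rewrite pinching_delta eqxx scale1r.
by move=> j /negPf nj; rewrite pinching_delta eq_sym nj scale0r kron0.
Qed.

Lemma psd_kron l N (W : 'M[C]_N) (i : 'I_l) : psdmx W -> psdmx (kron (delta_mx i i) W).
Proof.
by move=> pW; rewrite kron_P -[X in _ *m _ *m X](adjmxK (Pmat N i)); apply: psd_conj.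
Qed.

Lemma blockmx_blockdiag l N (a : 'I_l -> C) (W : 'I_l -> 'M[C]_N) i :
  blockmx (blockdiag a W) i i = a i *: W i.
Proof.
rewrite /blockdiag blockmx_sum (bigD1 i) //= big1 ?addr0.
  by rewrite blockmx_kron mxE !eqxx scale1r.
by move=> j /negPf nj; rewrite blockmx_kron mxE eq_sym nj scale0r.
Qed.

End S.

Theorem proposition8p3 (C : numClosedFieldType) (l N k : nat)
    (Psi : {linear 'M[C]_N -> 'M[C]_k}) :
  quantum_channel Psi ->
  forall Y : 'M[C]_(l * k),
    (exists X : 'M[C]_(l * N), density X /\ Y = tensmap (@pinching C l) Psi X) <->
    (exists (a : 'I_l -> C) (B : 'I_l -> 'M[C]_k),
        in_simplex a /\
        (forall i, exists Z : 'M[C]_N, density Z /\ B i = Psi Z) /\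
        Y = blockdiag a B).
Proof.
move=> _ Y; split.
  move=> [X [[pX trX] ->]]; rewrite tensmap_pinch.
  pose a i := \tr (blockmx X i i).
  have psdb i : psdmx (blockmx X i i) by rewrite block_P; apply: psd_conj.
  have a0 i : 0 <= a i by rewrite /a /mxtrace sumr_ge0 // => b _; apply: psd_diag.
  have suma : \sum_i a i = 1 by rewrite -trX tr_block.
  have [j0 nj0] : exists j0, a j0 != 0.
    case: (pickP (fun j => a j != 0)) => [j0 h|h]; first by exists j0.
    move: suma; rewrite big1 => [/eqP|j _]; first by rewrite eq_sym oner_eq0.
    by move: (h j) => /negbFE /eqP.
  pose c i := if a i != 0 then i else j0.
  have nc i : a (c i) != 0 by rewrite /c; case: ifP.
  pose Z i := (a (c i))^-1 *: blockmx X (c i) (c i).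
  exists a, (fun i => Psi (Z i)); split; first by [].
  split.
    move=> i; exists (Z i); split => //; split.
      by apply: psdZ => //; rewrite invr_ge0.
    by rewrite mxtraceZ mulVf.
  rewrite /blockdiag; apply: eq_bigr => i _; congr kron.
  have [ai0|ai0] := eqVneq (a i) 0.
    by rewrite ai0 scale0r (psd_tr0 (psdb i) ai0) linear0.
  by rewrite /Z /c ai0 -linearZ scalerA divff // scale1r.
move=> [a [B [[a0 suma] [hB ->]]]].
have [Z hZ] := fin_all_exists hB.
exists (blockdiag a Z); split; last first.
  rewrite tensmap_pinch /blockdiag; apply: eq_bigr => i _.
  by rewrite blockmx_blockdiag linearZ (proj2 (hZ i)).
split; last first.
  rewrite tr_block -suma; apply: eq_bigr => i _.
  by rewrite blockmx_blockdiag mxtraceZ (proj2 (proj1 (hZ i))) mulr1.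
rewrite /blockdiag; apply: psd_sum => i _; apply: psd_kron.
by apply: psdZ => //; case: (proj1 (hZ i)).
Qed.
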